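(* Let $P,Q,R\in D$ be non-collinear. Identify $S^1$ with $\mathbb{R}/\mathbb{Z}$ via $t\mapsto(\cos2\pi t,\sin2\pi t)$. Let $T_1,T_2\in S^1$ be the endpoints of the chord through $P,Q$, labelled so that $T_1-T_2\in(0,1/2]\bmod 1$; let $T_3\in S^1$ satisfy $2T_3=T_1+T_2\bmod 1$ and $T_3-T_2\in(0,1/2]\bmod1$, and let $T_4=T_3+\frac14\bmod 1$. Use Cartesian coordinates $(x_1,x_2)'$ with respect to the orthonormal basis $\{T_3,T_4\}$ (viewed as unit vectors). Let $u$ be the $x_1$-coordinate of $P$ (equal to that of $Q$), and $k:=e^{d'(P,Q)}$. Put $$A=\frac{2k(k^2+1)(1-u^2)}{(k^2-2ku+1)(k^2+2ku+1)},\quad B=\frac{(k^2+1)\sqrt{1-u^2}}{\sqrt{(k^2-2ku+1)(k^2+2ku+1)}},\quad C=\frac{(k^2-1)^2u}{(k^2-2ku+1)(k^2+2ku+1)},$$ and let $E=\{(x_1,x_2)': \frac{(x_1-C)^2}{A^2}+\frac{x_2^2}{B^2}=1\}$, with $\Phi$ the open region bounded by $E$. Then $E\subset D\cup S^1$ and $E$ is tangent to $S^1$ at $T_1$ and $T_2$. Moreover, if $m$ is the number of triangles inscribed in $S^1$ and circumscribing $\triangle PQR$, then $$m=\begin{cases}0 & \text{if } R\in\Phi,\\ 1 & \text{if } R\in E,\\ 2 & \text{if } R\in D\setminus\overline{\Phi}.\end{cases}$$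
   Context: $D=\{(x,y)\in\mathbb{R}^2: x^2+y^2<1\}$ (Beltrami–Klein disk), $S^1$ its boundary circle. For $P,Q\in D$, let $v_1,v_2\in S^1$ be the endpoints of the chord through $P,Q$; then $d'(P,Q)=\frac12\left|\log\frac{|v_1Q||v_2P|}{|v_1P||v_2Q|}\right|$ (this is the Poincaré-disk distance transported by the map $G^{-1}(x,y)=\left(\frac{x}{1+\sqrt{1-x^2-y^2}},\frac{y}{1+\sqrt{1-x^2-y^2}}\right)$). A triangle inscribed in $S^1$ and circumscribing $\triangle PQR$ is a Euclidean triangle with three distinct vertices on $S^1$ such that $P$, $Q$, $R$ lie on three distinct sides of it (one point on each side). *)

(* Defs.v *)
From Stdlib Require Import Reals ZArith Ensembles Finite_sets.
Open Scope R_scope.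

Definition point := (R * R)%type.

Definition norm2 (X : point) : R := fst X ^ 2 + snd X ^ 2.
(* Beltrami-Klein disk D and its boundary circle S^1 *)
Definition inD (X : point) : Prop := norm2 X < 1.
Definition onS1 (X : point) : Prop := norm2 X = 1.

Definition dist (X Y : point) : R :=
  sqrt ((fst X - fst Y) ^ 2 + (snd X - snd Y) ^ 2).

Definition cross3 (X Y Z : point) : R :=
  (fst Y - fst X) * (snd Z - snd X) - (snd Y - snd X) * (fst Z - fst X).
Definition collinear (X Y Z : point) : Prop := cross3 X Y Z = 0.

(* d'(P,Q) computed from the endpoints v1, v2 of the chord through P, Q *)
Definition dprime (v1 v2 P Q : point) : R :=
  / 2 * Rabs (ln ((dist v1 Q * dist v2 P) / (dist v1 P * dist v2 Q))).

Definition circ (t : R) : point := (cos (2 * PI * t), sin (2 * PI * t)).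

Definition coord1 (t3 : R) (X : point) : R :=
  fst X * fst (circ t3) + snd X * snd (circ t3).
Definition coord2 (t3 : R) (X : point) : R :=
  fst X * fst (circ (t3 + / 4)) + snd X * snd (circ (t3 + / 4)).

Definition ellA (k u : R) : R :=
  2 * k * (k ^ 2 + 1) * (1 - u ^ 2) /
  ((k ^ 2 - 2 * k * u + 1) * (k ^ 2 + 2 * k * u + 1)).
Definition ellB (k u : R) : R :=
  (k ^ 2 + 1) * sqrt (1 - u ^ 2) /
  sqrt ((k ^ 2 - 2 * k * u + 1) * (k ^ 2 + 2 * k * u + 1)).
Definition ellC (k u : R) : R :=
  (k ^ 2 - 1) ^ 2 * u /
  ((k ^ 2 - 2 * k * u + 1) * (k ^ 2 + 2 * k * u + 1)).

Definition ellF (t3 A B C : R) (X : point) : R :=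
  (coord1 t3 X - C) ^ 2 / A ^ 2 + coord2 t3 X ^ 2 / B ^ 2.

(* E is tangent to S^1 at X: X lies on both curves and the normal of E at X
   (the gradient of ellF, in (x1,x2)-coordinates) is parallel to the normal X
   of S^1 (in the same coordinates). *)
Definition ellipse_tangent_S1_at (t3 A B C : R) (X : point) : Prop :=
  onS1 X /\ ellF t3 A B C X = 1 /\
  (2 * (coord1 t3 X - C) / A ^ 2) * coord2 t3 X
    - (2 * coord2 t3 X / B ^ 2) * coord1 t3 X = 0.

Definition on_segment (X a b : point) : Prop :=
  exists s : R, 0 <= s <= 1 /\
    X = (fst a + s * (fst b - fst a), snd a + s * (snd b - snd a)).

Definition circumscribing_triangle (P Q R0 : point) (T : Ensemble point) : Prop :=
  exists a b c : point,
    onS1 a /\ onS1 b /\ onS1 c /\ a <> b /\ b <> c /\ a <> c /\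
    (forall x, In point T x <-> (x = a \/ x = b \/ x = c)) /\
    on_segment P a b /\ on_segment Q b c /\ on_segment R0 c a.

(* Main.v *)
Require Import Defs.
From Stdlib Require Import Reals ZArith Ensembles Finite_sets Lra Lia Psatz FunctionalExtensionality PropExtensionality Constructive_sets.
Open Scope R_scope.

Definition dot (X Y : point) : R := fst X * fst Y + snd X * snd Y.
Definition Dn (X b : point) : R := norm2 X + 1 - 2 * dot b X.
Definition IP (X b : point) : point :=
  (((norm2 X - 1) * fst b + 2 * (1 - dot b X) * fst X) / Dn X b,
   ((norm2 X - 1) * snd b + 2 * (1 - dot b X) * snd X) / Dn X b).

Lemma dot_lt1 b X : onS1 b -> inD X -> dot b X < 1.
Proof.
  destruct b as [b1 b2], X as [x1 x2]; unfold onS1, inD, norm2, dot; cbn [fst snd]; intros H1 H2.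
  assert (HL : (b1*x1+b2*x2)^2 + (b1*x2-b2*x1)^2 = (b1^2+b2^2)*(x1^2+x2^2)) by ring.
  rewrite H1 in HL. pose proof (pow2_ge_0 (b1*x2-b2*x1)).
  assert ((b1*x1+b2*x2)^2 < 1) by lra. nra.
Qed.

Lemma Dn_pos b X : onS1 b -> inD X -> 0 < Dn X b.
Proof.
  intros H1 H2. pose proof (dot_lt1 b X H1 H2) as H3.
  destruct b as [b1 b2], X as [x1 x2]; unfold Dn, onS1, inD, norm2, dot in *; cbn [fst snd] in *.
  assert (HL : (b1*x1+b2*x2)^2 + (b1*x2-b2*x1)^2 = (b1^2+b2^2)*(x1^2+x2^2)) by ring.
  rewrite H1 in HL. pose proof (pow2_ge_0 (b1*x2-b2*x1)). pose proof (pow2_ge_0 (1 - (b1*x1+b2*x2))). nra.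
Qed.

Lemma IP_on b X : onS1 b -> inD X -> onS1 (IP X b).
Proof.
  intros H1 H2. pose proof (Dn_pos b X H1 H2) as HD.
  destruct b as [b1 b2], X as [x1 x2]; unfold IP, Dn, onS1, inD, norm2, dot in *; cbn [fst snd] in *.
  field_simplify_eq; [| lra].
  replace (b2^2) with (1 - b1^2) by lra. ring.
Qed.

Definition sg (X b : point) : R := 2 * (1 - dot b X) / Dn X b.

Lemma IP_alt b X : onS1 b -> inD X ->
  IP X b = (fst b + sg X b * (fst X - fst b), snd b + sg X b * (snd X - snd b)).
Proof.
  intros H1 H2. pose proof (Dn_pos b X H1 H2) as HD.
  unfold IP, sg. f_equal; field_simplify_eq; try lra; unfold Dn in *; ring.
Qed.

Lemma sg_ge1 b X : onS1 b -> inD X -> 1 <= sg X b.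
Proof.
  intros H1 H2. pose proof (Dn_pos b X H1 H2) as HD. unfold sg.
  apply (Rmult_le_reg_r (Dn X b)); auto. field_simplify; [|lra].
  unfold Dn, inD in *. lra.
Qed.

Lemma par v1 v2 w1 w2 : v1^2+v2^2 <> 0 -> v1*w2 - v2*w1 = 0 ->
  w1 = (w1*v1+w2*v2)/(v1^2+v2^2) * v1 /\ w2 = (w1*v1+w2*v2)/(v1^2+v2^2) * v2.
Proof.
  intros H H0. split; field_simplify_eq; auto.
  - replace (w1 * v2^2) with (v2 * (v2 * w1)) by ring. replace (v2*w1) with (v1*w2) by lra. ring.
  - replace (w2 * v1^2) with (v1 * (v1 * w2)) by ring. replace (v1*w2) with (v2*w1) by lra. ring.
Qed.

Lemma neq_sq (a c : point) : a <> c -> (fst a - fst c)^2 + (snd a - snd c)^2 <> 0.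
Proof.
  destruct a as [a1 a2], c as [c1 c2]; cbn [fst snd]; intros H E.
  apply H. pose proof (pow2_ge_0 (a1-c1)). pose proof (pow2_ge_0 (a2-c2)).
  assert ((a1-c1)^2 = 0) by lra. assert ((a2-c2)^2 = 0) by lra.
  f_equal; nra.
Qed.

Lemma inD_neq_S1 b X : onS1 b -> inD X -> X <> b.
Proof. intros H1 H2 E; subst; unfold onS1, inD in *; lra. Qed.

Lemma IP_ne b X : onS1 b -> inD X -> IP X b <> b.
Proof.
  intros H1 H2 E. pose proof (sg_ge1 b X H1 H2).
  pose proof (neq_sq _ _ (inD_neq_S1 b X H1 H2)) as HN.
  rewrite (IP_alt b X H1 H2) in E. destruct b as [b1 b2], X as [x1 x2]. cbn [fst snd] in *.
  injection E as E1 E2. apply HN.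
  assert (x1 - b1 = 0) by (apply (Rmult_eq_reg_l (sg (x1,x2) (b1,b2))); lra).
  assert (x2 - b2 = 0) by (apply (Rmult_eq_reg_l (sg (x1,x2) (b1,b2))); lra).
  rewrite H0, H3. ring.
Qed.

Lemma IP_seg1 b X : onS1 b -> inD X -> on_segment X (IP X b) b.
Proof.
  intros H1 H2. pose proof (sg_ge1 b X H1 H2).
  rewrite (IP_alt b X H1 H2). exists (1 - / sg X b). split.
  - split. { assert (/ sg X b <= 1). { rewrite <- Rinv_1. apply Rinv_le_contravar; lra. }
             lra. }
    assert (0 < / sg X b) by (apply Rinv_0_lt_compat; lra). lra.
  - destruct X as [x1 x2]; cbn [fst snd]. f_equal; field; lra.
Qed.

Lemma IP_seg2 b X : onS1 b -> inD X -> on_segment X b (IP X b).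
Proof.
  intros H1 H2. pose proof (sg_ge1 b X H1 H2).
  rewrite (IP_alt b X H1 H2). exists (/ sg X b). split.
  - split. { assert (0 < / sg X b) by (apply Rinv_0_lt_compat; lra). lra. }
    rewrite <- Rinv_1. apply Rinv_le_contravar; lra.
  - destruct X as [x1 x2]; cbn [fst snd]. f_equal; field; lra.
Qed.

Lemma IP_unique b X z : onS1 b -> onS1 z -> inD X -> cross3 b X z = 0 -> z <> b -> z = IP X b.
Proof.
  intros H1 H2 H3 Hc Hz. rewrite (IP_alt b X H1 H3).
  pose proof (neq_sq _ _ (inD_neq_S1 b X H1 H3)) as HN.
  pose proof (neq_sq _ _ Hz) as HZ.
  pose proof (Dn_pos b X H1 H3) as HD.
  destruct b as [b1 b2], X as [x1 x2], z as [z1 z2].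
  unfold sg, Dn, onS1, inD, norm2, dot, cross3 in *; cbn [fst snd] in *.
  destruct (par (x1-b1) (x2-b2) (z1-b1) (z2-b2) HN ltac:(lra)) as [E1 E2].
  set (l := ((z1 - b1) * (x1 - b1) + (z2 - b2) * (x2 - b2)) / ((x1 - b1) ^ 2 + (x2 - b2) ^ 2)) in *.
  assert (Hl : l <> 0). { intro L0. rewrite L0 in E1, E2. apply HZ. rewrite E1, E2. ring. }
  assert (Hq : 2*l*(b1*(x1-b1)+b2*(x2-b2)) + l^2*((x1 - b1) ^ 2 + (x2 - b2) ^ 2) = 0).
  { replace z1 with (b1 + l*(x1-b1)) in H2 by lra. replace z2 with (b2 + l*(x2-b2)) in H2 by lra.
    lra. }
  assert (Hq2 : l = 2 * (1 - (b1 * x1 + b2 * x2)) / (x1 ^ 2 + x2 ^ 2 + 1 - 2 * (b1 * x1 + b2 * x2))).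
  { field_simplify_eq; [|lra].
    apply (Rmult_eq_reg_l l); auto.
    replace (x1 ^ 2 + x2 ^ 2 + 1 - 2 * (b1 * x1 + b2 * x2)) with ((x1 - b1) ^ 2 + (x2 - b2) ^ 2) by (rewrite <- H1; ring).
    replace (2 * (1 - (b1 * x1 + b2 * x2))) with (-2*(b1*(x1-b1)+b2*(x2-b2))) by (rewrite <- H1; ring).
    nra. }
  rewrite <- Hq2. f_equal; lra.
Qed.

Lemma chord_seg a c X : onS1 a -> onS1 c -> a <> c -> inD X -> cross3 a c X = 0 -> on_segment X c a.
Proof.
  intros Ha Hc Hac HX Hcr.
  pose proof (neq_sq _ _ Hac) as HN.
  destruct a as [a1 a2], c as [c1 c2], X as [x1 x2].
  unfold onS1, inD, norm2, cross3 in *; cbn [fst snd] in *.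
  destruct (par (a1-c1) (a2-c2) (x1-c1) (x2-c2) HN ltac:(lra)) as [E1 E2].
  set (l := ((x1 - c1) * (a1 - c1) + (x2 - c2) * (a2 - c2)) / ((a1 - c1) ^ 2 + (a2 - c2) ^ 2)) in *.
  assert (HV : 0 < (a1 - c1) ^ 2 + (a2 - c2) ^ 2).
  { pose proof (pow2_ge_0 (a1-c1)). pose proof (pow2_ge_0 (a2-c2)). lra. }
  assert (Hq : l * (1 - l) * ((a1 - c1) ^ 2 + (a2 - c2) ^ 2) > 0).
  { replace x1 with (c1 + l*(a1-c1)) in HX by lra. replace x2 with (c2 + l*(a2-c2)) in HX by lra.
    nra. }
  assert (Hq2 : l * (1 - l) > 0).
  { apply (Rmult_lt_reg_r ((a1 - c1) ^ 2 + (a2 - c2) ^ 2)); lra. }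
  exists l. split. { destruct (Rlt_le_dec l 0); destruct (Rlt_le_dec 1 l); split; nra. }
  cbn [fst snd]; f_equal; lra.
Qed.

Lemma seg_cross X a b : on_segment X a b -> cross3 a b X = 0.
Proof.
  intros [s [_ E]]. subst X. destruct a, b. unfold cross3; cbn [fst snd]. ring.
Qed.

Lemma seg_sym X a b : on_segment X a b -> on_segment X b a.
Proof.
  intros [s [Hs E]]. exists (1 - s). split; [lra|]. rewrite E. destruct a, b; cbn [fst snd]. f_equal; ring.
Qed.

Lemma IP_inv b X : onS1 b -> inD X -> IP X (IP X b) = b.
Proof.
  intros H1 H2. symmetry. apply IP_unique; auto using IP_on.
  - pose proof (seg_cross _ _ _ (IP_seg1 b X H1 H2)) as Hc.
    destruct (IP X b), X, b. unfold cross3 in *; cbn [fst snd] in *. lra.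
  - intro E. apply (IP_ne b X H1 H2). auto.
Qed.

Definition cr (X Y : point) : R := fst X * snd Y - snd X * fst Y.

Definition Gs (nP nQ dP dQ cbR cQR cPR cbQ cPb cPQ : R) : R :=
  let al := nP - 1 in let be := 2*(1-dP) in let ga := nQ - 1 in let de := 2*(1-dQ) in
  let DP := nP + 1 - 2*dP in let DQ := nQ + 1 - 2*dQ in
  DP*(ga*cbR + de*cQR) - DQ*(al*cbR + be*cPR) + (al*de*cbQ + be*ga*cPb + be*de*cPQ).

Definition Gf (P Q R0 b : point) : R :=
  Gs (norm2 P) (norm2 Q) (dot b P) (dot b Q) (cr b R0) (cr Q R0) (cr P R0) (cr b Q) (cr P b) (cr P Q).

Lemma G_cross P Q R0 b : onS1 b -> inD P -> inD Q ->
  cross3 (IP P b) (IP Q b) R0 * Dn P b * Dn Q b = Gf P Q R0 b.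
Proof.
  intros H1 H2 H3. pose proof (Dn_pos b P H1 H2). pose proof (Dn_pos b Q H1 H3).
  unfold Gf, Gs, IP, cross3, cr. cbv zeta. destruct P as [p1 p2], Q as [q1 q2], R0 as [r1 r2], b as [b1 b2]. unfold Dn, norm2, dot in *. cbn [fst snd] in *. field. split; lra.
Qed.

Definition Lf (u p q r t x y : R) : R :=
  (1+u^2+p*q-(p+q)*t-2*u*r) + (r*(1+u^2-p*q)-2*u+u*(p+q)*t)*x + (t*(1-u^2+p*q)-(p+q)+u*(p+q)*r)*y.

Lemma G_rot u p q r t x y : x^2 + y^2 = 1 ->
  Gs (u^2+p^2) (u^2+q^2) (x*u+y*p) (x*u+y*q) (x*t-y*r) (u*t-q*r) (u*t-p*r) (x*q-y*u) (u*y-p*x) (u*q-p*u)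
  = 2*(p-q)*(x-u)*Lf u p q r t x y.
Proof.
  intro H.
  assert (E : forall Z, Z = Z + (x^2+y^2-1) * ((2)*q*r + (-2)*p*r + (-2)*p*q^2*r + (2)*p^2*q*r + (-2)*u*q + (2)*u*p + (2)*u*p*q^2 + (-2)*u*p^2*q + (-2)*u^2*q*r + (2)*u^2*p*r + (2)*u^3*q + (-2)*u^3*p)).
  { intro Z. rewrite H. ring. }
  rewrite (E (2*(p-q)*(x-u)*Lf u p q r t x y)). unfold Gs, Lf. ring.
Qed.

Lemma cross_trans b A X Y : A <> b -> cross3 b A X = 0 -> cross3 b A Y = 0 -> cross3 b X Y = 0.
Proof.
  intros HA H1 H2. pose proof (neq_sq _ _ HA) as HN.
  destruct b as [b1 b2], A as [a1 a2], X as [x1 x2], Y as [y1 y2].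
  unfold cross3 in *; cbn [fst snd] in *.
  destruct (par (a1-b1) (a2-b2) (x1-b1) (x2-b2) HN ltac:(lra)) as [E1 E2].
  destruct (par (a1-b1) (a2-b2) (y1-b1) (y2-b2) HN ltac:(lra)) as [F1 F2].
  set (l1 := ((x1 - b1) * (a1 - b1) + (x2 - b2) * (a2 - b2)) / ((a1 - b1) ^ 2 + (a2 - b2) ^ 2)) in *.
  set (l2 := ((y1 - b1) * (a1 - b1) + (y2 - b2) * (a2 - b2)) / ((a1 - b1) ^ 2 + (a2 - b2) ^ 2)) in *.
  rewrite E1, E2, F1, F2. ring.
Qed.

Definition Tb (P Q b : point) : Ensemble point := fun x => x = IP P b \/ x = b \/ x = IP Q b.

Lemma valid_ac P Q b : onS1 b -> inD P -> inD Q -> cross3 b P Q <> 0 -> IP P b <> IP Q b.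
Proof.
  intros H1 H2 H3 Hc E. apply Hc.
  pose proof (seg_cross _ _ _ (IP_seg1 b P H1 H2)) as C1.
  pose proof (seg_cross _ _ _ (IP_seg2 b Q H1 H3)) as C2.
  rewrite <- E in C2.
  apply (cross_trans b (IP P b)).
  - apply IP_ne; auto.
  - destruct (IP P b), P, b. unfold cross3 in *; cbn [fst snd] in *. lra.
  - destruct (IP P b), Q, b. unfold cross3 in *; cbn [fst snd] in *. lra.
Qed.

Section Char.
Variables (P Q R0 : point) (L0 m1 m2 : R).
Hypotheses (HP : inD P) (HQ : inD Q) (HR : inD R0).
Let Lb (b : point) : R := L0 + m1 * fst b + m2 * snd b.
Hypothesis HG : forall b, onS1 b -> Gf P Q R0 b = 2 * cross3 b P Q * Lb b.
Hypothesis HT : forall b, onS1 b -> cross3 b P Q = 0 -> Lb b <> 0.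

Lemma char1 T : circumscribing_triangle P Q R0 T ->
  exists b, onS1 b /\ Lb b = 0 /\ (forall x, In point T x <-> Tb P Q b x).
Proof.
  intros (a & b & c & Ha & Hb & Hc & Hab & Hbc & Hac & HT' & S1 & S2 & S3).
  assert (Ea : a = IP P b).
  { apply IP_unique; auto. pose proof (seg_cross _ _ _ S1).
    destruct a, b, P. unfold cross3 in *; cbn [fst snd] in *. lra. }
  assert (Ec : c = IP Q b).
  { apply IP_unique; auto. pose proof (seg_cross _ _ _ S2).
    destruct c, b, Q. unfold cross3 in *; cbn [fst snd] in *. lra. }
  exists b. split; [auto|]. split.
  - pose proof (seg_cross _ _ _ S3) as C3.
    pose proof (G_cross P Q R0 b Hb HP HQ) as G. rewrite HG in G by auto.
    rewrite <- Ea, <- Ec in G.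
    assert (cross3 a c R0 = 0).
    { destruct a, c, R0. unfold cross3 in *; cbn [fst snd] in *. lra. }
    rewrite H in G. 
    destruct (Req_dec (cross3 b P Q) 0) as [Z|Z].
    + exfalso. apply Hac. rewrite Ec. apply IP_unique; auto.
      apply (cross_trans b P).
      { apply inD_neq_S1; auto. }
      { auto. }
      { pose proof (seg_cross _ _ _ S1).
        destruct a, b, P. unfold cross3 in *; cbn [fst snd] in *. lra. }
    + assert (2 * cross3 b P Q * Lb b = 0) by lra.
      apply Rmult_integral in H0. destruct H0 as [H0|H0]; auto. lra.
  - intro x. rewrite HT'. unfold Tb. rewrite <- Ea, <- Ec. tauto.
Qed.

Lemma char2 b T : onS1 b -> Lb b = 0 -> (forall x, In point T x <-> Tb P Q b x) ->
  circumscribing_triangle P Q R0 T.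
Proof.
  intros Hb HL HTx.
  assert (Hc : cross3 b P Q <> 0) by (intro Z; exact (HT b Hb Z HL)).
  exists (IP P b), b, (IP Q b).
  split; [apply IP_on; auto|]. split; [auto|]. split; [apply IP_on; auto|].
  split; [apply IP_ne; auto|]. split; [intro E; apply (IP_ne b Q Hb HQ); auto|].
  split; [apply valid_ac; auto|]. split; [exact HTx|].
  split; [|split].
  - apply IP_seg1; auto.
  - apply IP_seg2; auto.
  - apply chord_seg; auto using IP_on, valid_ac.
    pose proof (G_cross P Q R0 b Hb HP HQ) as G. rewrite HG in G by auto.
    rewrite HL in G. pose proof (Dn_pos b P Hb HP). pose proof (Dn_pos b Q Hb HQ).
    assert (cross3 (IP P b) (IP Q b) R0 * (Dn P b * Dn Q b) = 0) by lra.
    apply Rmult_integral in H1. destruct H1; auto. nra.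
Qed.
End Char.

Section Count.
Variables (P Q R0 : point) (L0 m1 m2 : R).
Hypotheses (HP : inD P) (HQ : inD Q) (HR : inD R0).
Let Lb (b : point) : R := L0 + m1 * fst b + m2 * snd b.
Hypothesis HG : forall b, onS1 b -> Gf P Q R0 b = 2 * cross3 b P Q * Lb b.
Hypothesis HT : forall b, onS1 b -> cross3 b P Q = 0 -> Lb b <> 0.

Lemma inj b1 b2 : onS1 b1 -> onS1 b2 -> Lb b1 = 0 -> Lb b2 = 0 ->
  (forall x, Tb P Q b1 x <-> Tb P Q b2 x) -> b1 = b2.
Proof.
  intros H1 H2 L1 L2 E.
  assert (V1 : IP P b1 <> IP Q b1) by (apply valid_ac; auto; intro Z; exact (HT b1 H1 Z L1)).
  assert (V2 : IP P b2 <> IP Q b2) by (apply valid_ac; auto; intro Z; exact (HT b2 H2 Z L2)).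
  assert (M : Tb P Q b1 b2) by (apply E; unfold Tb; auto).
  destruct M as [M|[M|M]]; auto; exfalso.
  -
    assert (A2 : IP P b2 = b1) by (rewrite M; apply IP_inv; auto).
    assert (Mc : Tb P Q b1 (IP Q b2)) by (apply E; unfold Tb; auto).
    destruct Mc as [Mc|[Mc|Mc]].
    + apply (IP_ne b2 Q H2 HQ). congruence.
    + apply V2. congruence.
    + apply (IP_ne b1 P H1 HP). rewrite <- M.
      rewrite <- (IP_inv b2 Q H2 HQ), Mc. apply IP_inv; auto.
  -
    assert (C2 : IP Q b2 = b1) by (rewrite M; apply IP_inv; auto).
    assert (Ma : Tb P Q b1 (IP P b2)) by (apply E; unfold Tb; auto).
    destruct Ma as [Ma|[Ma|Ma]].
    + apply (IP_ne b1 Q H1 HQ). rewrite <- M.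
      rewrite <- (IP_inv b2 P H2 HP), Ma. apply IP_inv; auto.
    + apply V2. congruence.
    + apply (IP_ne b2 P H2 HP). congruence.
Qed.

Lemma ens_eq (T1 T2 : Ensemble point) : (forall x, T1 x <-> T2 x) -> T1 = T2.
Proof. intro H. apply functional_extensionality. intro x. apply propositional_extensionality. auto. Qed.

Lemma Tri_eq (S : Ensemble (Ensemble point)) :
  (forall T, circumscribing_triangle P Q R0 T <-> S T) -> circumscribing_triangle P Q R0 = S.
Proof. intro H. apply functional_extensionality. intro T. apply propositional_extensionality. auto. Qed.

Lemma tri_iff T : circumscribing_triangle P Q R0 T <-> exists b, onS1 b /\ Lb b = 0 /\ T = Tb P Q b.
Proof.
  split.
  - intro H. destruct (char1 P Q R0 L0 m1 m2 HP HQ HR HG HT T H) as (b & Hb & HL & HTx).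
    exists b. repeat split; auto. apply ens_eq. exact HTx.
  - intros (b & Hb & HL & ->). apply (char2 P Q R0 L0 m1 m2 HP HQ HR HG HT b); auto. tauto.
Qed.

Lemma card0 : m1^2 + m2^2 - L0^2 < 0 -> cardinal _ (circumscribing_triangle P Q R0) 0.
Proof.
  intro H. replace (circumscribing_triangle P Q R0) with (Empty_set (Ensemble point)).
  { constructor. }
  symmetry. apply Tri_eq. intro T. split; [|intro E; destruct E].
  rewrite tri_iff. intros (b & Hb & HL & _). exfalso.
  destruct b as [x y]. unfold Lb, onS1, norm2 in *; cbn [fst snd] in *.
  assert (HLg : (m1*x+m2*y)^2 + (m2*x-m1*y)^2 = (m1^2+m2^2)*(x^2+y^2)) by ring.
  rewrite Hb in HLg. replace (m1*x+m2*y) with (-L0) in HLg by lra.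
  pose proof (pow2_ge_0 (m2*x-m1*y)). nra.
Qed.

Lemma sol_form x y : x^2 + y^2 = 1 -> L0 + m1*x + m2*y = 0 -> m1^2+m2^2 <> 0 ->
  let s := m2*x - m1*y in
  s^2 = m1^2 + m2^2 - L0^2 /\
  x = (-L0*m1 + m2*s)/(m1^2+m2^2) /\ y = (-L0*m2 - m1*s)/(m1^2+m2^2).
Proof.
  intros H1 H2 HM s. subst s.
  assert (HLg : (m1*x+m2*y)^2 + (m2*x-m1*y)^2 = (m1^2+m2^2)*(x^2+y^2)) by ring.
  rewrite H1 in HLg. replace (m1*x+m2*y) with (-L0) in HLg by lra.
  split; [lra|]. split; field_simplify_eq; auto.
  - replace L0 with (-(m1*x+m2*y)) by lra. ring.
  - replace L0 with (-(m1*x+m2*y)) by lra. ring.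
Qed.

Lemma sol_ok s : m1^2+m2^2 <> 0 -> s^2 = m1^2 + m2^2 - L0^2 ->
  let b := ((-L0*m1 + m2*s)/(m1^2+m2^2), (-L0*m2 - m1*s)/(m1^2+m2^2)) in
  onS1 b /\ Lb b = 0.
Proof.
  intros HM Hs b. unfold b, Lb, onS1, norm2; cbn [fst snd]. split.
  - field_simplify_eq; auto. rewrite Hs. ring.
  - field; auto.
Qed.

Lemma HM_nz : (exists b0, onS1 b0 /\ cross3 b0 P Q = 0) -> m1^2 + m2^2 - L0^2 = 0 -> m1^2+m2^2 <> 0.
Proof.
  intros (b0 & H0 & C0) H E.
  assert (m1 = 0) by nra. assert (m2 = 0) by nra. assert (L0 = 0) by nra.
  apply (HT b0 H0 C0). unfold Lb. subst. ring.
Qed.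

Lemma card1 : (exists b0, onS1 b0 /\ cross3 b0 P Q = 0) ->
  m1^2 + m2^2 - L0^2 = 0 -> cardinal _ (circumscribing_triangle P Q R0) 1.
Proof.
  intros Hb0 H. pose proof (HM_nz Hb0 H) as HM.
  destruct (sol_ok 0 HM ltac:(lra)) as [S1 S2].
  set (b := ((-L0*m1 + m2*0)/(m1^2+m2^2), (-L0*m2 - m1*0)/(m1^2+m2^2))) in *.
  replace (circumscribing_triangle P Q R0) with (Add _ (Empty_set (Ensemble point)) (Tb P Q b)).
  { constructor. constructor. intro E; destruct E. }
  symmetry. apply Tri_eq. intro T. rewrite tri_iff. split.
  - intros (b' & Hb' & HL & ->). right.
    destruct b' as [x y]. unfold Lb, onS1, norm2 in Hb', HL; cbn [fst snd] in *.
    destruct (sol_form x y Hb' HL HM) as (Hs & Ex & Ey).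
    assert (m2 * x - m1 * y = 0) by nra.
    rewrite H0 in Ex, Ey. rewrite Ex, Ey. constructor.
  - intro HT'. destruct HT' as [T E|T E]. { destruct E. }
    destruct E. exists b. auto.
Qed.

Lemma card2 : m1^2 + m2^2 - L0^2 > 0 -> cardinal _ (circumscribing_triangle P Q R0) 2.
Proof.
  intros H. assert (HM : m1^2+m2^2 <> 0) by (pose proof (pow2_ge_0 L0); lra).
  set (s := sqrt (m1^2 + m2^2 - L0^2)).
  assert (Hs : s^2 = m1^2 + m2^2 - L0^2) by (unfold s; rewrite pow2_sqrt; lra).
  assert (Hs0 : 0 < s) by (unfold s; apply sqrt_lt_R0; lra).
  destruct (sol_ok s HM Hs) as [S1 S2].
  destruct (sol_ok (-s) HM ltac:(rewrite <- Hs; ring)) as [S3 S4].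
  set (bp := ((-L0*m1 + m2*s)/(m1^2+m2^2), (-L0*m2 - m1*s)/(m1^2+m2^2))) in *.
  set (bm := ((-L0*m1 + m2*(-s))/(m1^2+m2^2), (-L0*m2 - m1*(-s))/(m1^2+m2^2))) in *.
  assert (Hne : bp <> bm).
  { intro E.
    assert (I1 : m2 * fst bp - m1 * snd bp = s) by (unfold bp; cbn [fst snd]; field; auto).
    assert (I2 : m2 * fst bm - m1 * snd bm = -s) by (unfold bm; cbn [fst snd]; field; auto).
    rewrite E in I1. lra. }
  replace (circumscribing_triangle P Q R0) with (Add _ (Add _ (Empty_set (Ensemble point)) (Tb P Q bp)) (Tb P Q bm)).
  { constructor. { constructor. constructor. intro E; destruct E. }
    intro E. apply Union_inv in E. destruct E as [E|E]; [destruct E|].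
    apply Singleton_inv in E. apply Hne. apply (inj bp bm); auto. intro x; rewrite E; tauto. }
  symmetry. apply Tri_eq. intro T. rewrite tri_iff. split.
  - intros (b' & Hb' & HL & ->).
    destruct b' as [x y]. unfold Lb, onS1, norm2 in Hb', HL; cbn [fst snd] in *.
    destruct (sol_form x y Hb' HL HM) as (Hs2 & Ex & Ey).
    assert (Hsq : (m2 * x - m1 * y - s) * (m2 * x - m1 * y + s) = 0) by nra.
    apply Rmult_integral in Hsq. destruct Hsq as [Z|Z].
    + left. right. replace (m2 * x - m1 * y) with s in Ex, Ey by lra. rewrite Ex, Ey. constructor.
    + right. replace (m2 * x - m1 * y) with (-s) in Ex, Ey by lra. rewrite Ex, Ey. constructor.
  - intro HT'. destruct HT' as [T E|T E].
    + destruct E as [T E|T E]; [destruct E|]. destruct E. exists bp. auto.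
    + destruct E. exists bm. auto.
Qed.
End Count.

Definition f1 (c s : R) (X : point) : R := fst X * c + snd X * s.
Definition f2 (c s : R) (X : point) : R := - fst X * s + snd X * c.

Section Rot.
Variables c s : R.
Hypothesis Hcs : c^2 + s^2 = 1.

Lemma norm2_f X : norm2 X = f1 c s X ^2 + f2 c s X ^2.
Proof.
  transitivity ((c^2+s^2) * norm2 X); [rewrite Hcs; ring|]. unfold norm2, f1, f2. ring.
Qed.
Lemma dot_f X Y : dot X Y = f1 c s X * f1 c s Y + f2 c s X * f2 c s Y.
Proof.
  transitivity ((c^2+s^2) * dot X Y); [rewrite Hcs; ring|]. unfold dot, f1, f2. ring.
Qed.
Lemma cr_f X Y : cr X Y = f1 c s X * f2 c s Y - f2 c s X * f1 c s Y.
Proof.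
  transitivity ((c^2+s^2) * cr X Y); [rewrite Hcs; ring|]. unfold cr, f1, f2. ring.
Qed.
Lemma cross3_f X Y Z : cross3 X Y Z =
  (f1 c s Y - f1 c s X) * (f2 c s Z - f2 c s X) - (f2 c s Y - f2 c s X) * (f1 c s Z - f1 c s X).
Proof.
  transitivity ((c^2+s^2) * cross3 X Y Z); [rewrite Hcs; ring|]. unfold cross3, f1, f2. ring.
Qed.
Lemma dist_f (X Y : point) : Defs.dist X Y = sqrt ((f1 c s X - f1 c s Y)^2 + (f2 c s X - f2 c s Y)^2).
Proof.
  unfold Defs.dist. f_equal.
  transitivity ((c^2+s^2) * ((fst X - fst Y) ^ 2 + (snd X - snd Y) ^ 2)); [rewrite Hcs; ring|].
  unfold f1, f2. ring.
Qed.

Lemma G_f P Q R0 b : onS1 b -> f1 c s Q = f1 c s P ->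
  Gf P Q R0 b = 2 * cross3 b P Q *
    Lf (f1 c s P) (f2 c s P) (f2 c s Q) (f1 c s R0) (f2 c s R0) (f1 c s b) (f2 c s b).
Proof.
  intros Hb HQ. unfold Gf. rewrite !norm2_f, !dot_f, !cr_f, cross3_f.
  unfold onS1 in Hb. rewrite norm2_f in Hb. rewrite HQ.
  rewrite (G_rot _ _ _ _ _ _ _ Hb). ring.
Qed.
End Rot.

Lemma Lf_at u p q r t y : u^2 + y^2 = 1 -> Lf u p q r t u y = (p-y)*(q-y)*(1+t*y-u*r).
Proof.
  intro H. unfold Lf.
  assert (E : forall Z, Z = Z + (u^2+y^2-1) * ((-1) + (-1)*t*y + (1)*q*t + (1)*p*t + (1)*u*r)).
  { intro Z. rewrite H. ring. }
  rewrite (E ((p-y)*(q-y)*(1+t*y-u*r))). ring.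
Qed.

Lemma Lf_nz u p q r t y : u^2 + y^2 = 1 -> u^2+p^2 < 1 -> u^2+q^2 < 1 -> r^2+t^2 < 1 ->
  Lf u p q r t u y <> 0.
Proof.
  intros H1 H2 H3 H4. rewrite Lf_at by auto.
  assert (p <> y) by (intro; subst; lra).
  assert (q <> y) by (intro; subst; lra).
  assert (HL : (u*r - t*y)^2 + (u*t + y*r)^2 = (u^2+y^2)*(r^2+t^2)) by ring.
  rewrite H1 in HL. pose proof (pow2_ge_0 (u*t+y*r)).
  assert ((u*r - t*y)^2 < 1) by lra.
  assert (1 + t*y - u*r <> 0) by nra.
  apply Rmult_integral_contrapositive_currified; [apply Rmult_integral_contrapositive_currified|]; lra.
Qed.

Lemma circ4 t : circ (t + /4) = (- sin (2*PI*t), cos (2*PI*t)).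
Proof.
  unfold circ. replace (2 * PI * (t + /4)) with (2*PI*t + PI/2) by field.
  rewrite cos_plus, sin_plus, cos_PI2, sin_PI2. f_equal; ring.
Qed.

Lemma coord1_f t3 X : coord1 t3 X = f1 (cos (2*PI*t3)) (sin (2*PI*t3)) X.
Proof. reflexivity. Qed.
Lemma coord2_f t3 X : coord2 t3 X = f2 (cos (2*PI*t3)) (sin (2*PI*t3)) X.
Proof. unfold coord2, f2. rewrite circ4. cbn [fst snd]. ring. Qed.

Lemma sin_mpi (m : Z) : sin (IZR m * PI) = 0.
Proof. apply sin_eq_0_1. exists m. reflexivity. Qed.

Lemma per (x : R) (m : Z) : cos (x + 2*IZR m*PI) = cos x /\ sin (x + 2*IZR m*PI) = sin x.
Proof.
  assert (C : cos (2*IZR m*PI) = 1).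
  { replace (2*IZR m*PI) with (2*(IZR m*PI)) by ring. rewrite cos_2a_sin, sin_mpi. ring. }
  assert (S : sin (2*IZR m*PI) = 0).
  { replace (2*IZR m*PI) with (2*(IZR m*PI)) by ring. rewrite sin_2a, sin_mpi. ring. }
  rewrite cos_plus, sin_plus, C, S. split; ring.
Qed.

Definition EF (K u x1 x2 : R) : R :=
  (x1 - (K-4)*u/(K-4*u^2))^2/(4*K*(1-u^2)^2/(K-4*u^2)^2) + x2^2/(K*(1-u^2)/(K-4*u^2)).

Lemma EF_id K u x1 x2 : 4 <= K -> u^2 < 1 ->
  1 - x1^2 - x2^2 = (K-4)/(4*(1-u^2))*(x1-u)^2 + K*(1-u^2)/(K-4*u^2) * (1 - EF K u x1 x2).
Proof.
  intros HK Hu. unfold EF.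
  assert (K - 4*u^2 <> 0) by nra. assert (1 - u^2 <> 0) by lra. assert (K <> 0) by lra.
  field. auto.
Qed.

Lemma EF_in K u x1 x2 : 4 <= K -> u^2 < 1 -> EF K u x1 x2 = 1 -> x1^2 + x2^2 <= 1.
Proof.
  intros HK Hu HE. pose proof (EF_id K u x1 x2 HK Hu) as I. rewrite HE in I.
  assert (0 <= (K-4)/(4*(1-u^2))*(x1-u)^2).
  { apply Rmult_le_pos; [|apply pow2_ge_0]. apply Rmult_le_pos; [lra|].
    left. apply Rinv_0_lt_compat. lra. }
  lra.
Qed.

Lemma EF_tan K u w : 4 <= K -> u^2 < 1 -> w^2 = 1 - u^2 ->
  EF K u u w = 1 /\
  2 * (u - (K-4)*u/(K-4*u^2)) / (4*K*(1-u^2)^2/(K-4*u^2)^2) * w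
    - 2 * w / (K*(1-u^2)/(K-4*u^2)) * u = 0.
Proof.
  intros HK Hu Hw. unfold EF.
  assert (K - 4*u^2 <> 0) by nra. assert (1 - u^2 <> 0) by lra. assert (K <> 0) by lra.
  assert (w <> 0) by (intro; subst; nra).
  split.
  - rewrite Hw. field. auto.
  - field_simplify_eq; auto.
Qed.

Definition Lc0 (u p q r t : R) := 1+u^2+p*q-(p+q)*t-2*u*r.
Definition Lc1 (u p q r t : R) := r*(1+u^2-p*q)-2*u+u*(p+q)*t.
Definition Lc2 (u p q r t : R) := t*(1-u^2+p*q)-(p+q)+u*(p+q)*r.

Lemma Lf_c u p q r t x y : Lf u p q r t x y = Lc0 u p q r t + Lc1 u p q r t * x + Lc2 u p q r t * y.
Proof. reflexivity. Qed.

Lemma Delta_id u p q r t :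
  let N := 4*(1-u^2-p*q)^2 in let D0 := (1-u^2-p^2)*(1-u^2-q^2) in
  1-u^2-p^2 <> 0 -> 1-u^2-q^2 <> 0 -> 1-u^2-p*q <> 0 -> N - 4*u^2*D0 <> 0 -> 1 - u^2 <> 0 ->
  (Lc1 u p q r t ^2 + Lc2 u p q r t ^2 - Lc0 u p q r t ^2) * (N/D0 - 4*u^2)
  = N * (1-u^2) * (EF (N/D0) u r t - 1).
Proof.
  intros N D0 H1 H2 H3 H4 H5. unfold EF, Lc0, Lc1, Lc2, N, D0 in *.
  field. repeat split; auto.
Qed.

Definition K2 (k : R) : R := (k^2+1)^2/k^2.

Lemma den_pos k u : 0 < k -> u^2 < 1 -> 0 < (k ^ 2 - 2 * k * u + 1) * (k ^ 2 + 2 * k * u + 1).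
Proof.
  intros Hk Hu. replace ((k ^ 2 - 2 * k * u + 1) * (k ^ 2 + 2 * k * u + 1)) with ((k^2-1)^2 + 4*k^2*(1-u^2)) by ring.
  pose proof (pow2_ge_0 (k^2-1)). assert (0 < k^2) by nra. nra.
Qed.

Lemma K2_ge4 k : 0 < k -> 4 <= K2 k.
Proof.
  intro Hk. unfold K2. assert (0 < k^2) by nra.
  replace ((k^2+1)^2/k^2) with (4 + (k^2-1)^2/k^2) by (field; lra).
  assert (0 <= (k^2-1)^2/k^2) by (apply Rmult_le_pos; [apply pow2_ge_0| left; apply Rinv_0_lt_compat; lra]).
  lra.
Qed.

Lemma den_fac k u : 0 < k -> u^2 < 1 -> k ^ 2 - 2 * k * u + 1 <> 0 /\ k ^ 2 + 2 * k * u + 1 <> 0.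
Proof.
  intros Hk Hu. pose proof (den_pos k u Hk Hu) as H.
  split; intro Z; rewrite Z in H; lra.
Qed.

Lemma K2_sub k u : 0 < k -> K2 k - 4*u^2 = (k ^ 2 - 2 * k * u + 1) * (k ^ 2 + 2 * k * u + 1) / k^2.
Proof. intro Hk. unfold K2. field. lra. Qed.

Lemma ellA2 k u : 0 < k -> u^2 < 1 -> (ellA k u)^2 = 4*K2 k*(1-u^2)^2/(K2 k-4*u^2)^2.
Proof.
  intros Hk Hu. pose proof (den_pos k u Hk Hu). rewrite K2_sub by auto.
  destruct (den_fac k u Hk Hu).
  unfold ellA, K2. field. repeat split; lra.
Qed.

Lemma ellB2 k u : 0 < k -> u^2 < 1 -> (ellB k u)^2 = K2 k*(1-u^2)/(K2 k-4*u^2).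
Proof.
  intros Hk Hu. pose proof (den_pos k u Hk Hu). rewrite K2_sub by auto.
  unfold ellB, K2. unfold Rdiv. rewrite !Rpow_mult_distr, pow_inv, !pow2_sqrt by lra.
  destruct (den_fac k u Hk Hu). field. repeat split; lra.
Qed.

Lemma ellC_eq k u : 0 < k -> u^2 < 1 -> ellC k u = (K2 k-4)*u/(K2 k-4*u^2).
Proof.
  intros Hk Hu. pose proof (den_pos k u Hk Hu). rewrite K2_sub by auto.
  destruct (den_fac k u Hk Hu). unfold ellC, K2. field. repeat split; lra.
Qed.

Lemma sq_abs x a : sqrt ((x - x)^2 + a^2) = Rabs a.
Proof.
  replace ((x - x)^2 + a^2) with (Rabs a ^ 2).
  - apply sqrt_pow2. apply Rabs_pos.
  - rewrite <- Rsqr_pow2, <- Rsqr_abs, Rsqr_pow2. ring.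
Qed.

Lemma k_rel w p q k : w <> 0 -> p^2 < w^2 -> q^2 < w^2 ->
  k = exp (/2 * Rabs (ln ((Rabs (w - q) * Rabs (-w - p)) / (Rabs (w - p) * Rabs (-w - q))))) ->
  0 < k /\ (k^2+1)^2 * ((w^2-p^2)*(w^2-q^2)) = 4 * k^2 * (w^2 - p*q)^2.
Proof.
  intros Hw Hp Hq Hk.
  set (X := (w-q)*(w+p)). set (Y := (w-p)*(w+q)).
  assert (HXY : 0 < X*Y) by (unfold X, Y; replace ((w - q) * (w + p) * ((w - p) * (w + q))) with ((w^2-p^2)*(w^2-q^2)) by ring; nra).
  assert (HY : Y <> 0) by (intro Z; rewrite Z in HXY; lra).
  assert (HX : X <> 0) by (intro Z; rewrite Z in HXY; lra).
  assert (Hpos : 0 < X/Y) by (replace (X/Y) with (X*Y/(Y^2)) by (field; auto); apply Rdiv_lt_0_compat; auto; nra).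
  assert (Hr : (Rabs (w - q) * Rabs (-w - p)) / (Rabs (w - p) * Rabs (-w - q)) = X/Y).
  { replace (-w-p) with (-(w+p)) by ring. replace (-w-q) with (-(w+q)) by ring.
    rewrite !Rabs_Ropp, <- !Rabs_mult. fold X Y. unfold Rdiv. rewrite <- Rabs_inv, <- Rabs_mult.
    apply Rabs_right. left. exact Hpos. }
  rewrite Hr in Hk. set (rho := X/Y) in *.
  assert (Hrho : 0 < rho) by exact Hpos.
  split. { rewrite Hk. apply exp_pos. }
  assert (Hk2 : k^2 = exp (Rabs (ln rho))).
  { rewrite Hk. replace (exp (/2 * Rabs (ln rho)) ^ 2) with (exp (/2 * Rabs (ln rho)) * exp (/2*Rabs (ln rho))) by ring.
    rewrite <- exp_plus. f_equal. field. }
  assert (HS : X + Y = 2 * (w^2 - p*q)) by (unfold X, Y; ring).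
  assert (HD : X * Y = (w^2-p^2)*(w^2-q^2)) by (unfold X, Y; ring).
  rewrite <- HD. destruct (Rle_dec 0 (ln rho)) as [L|L].
  - rewrite Rabs_right in Hk2 by lra. rewrite exp_ln in Hk2 by auto. rewrite Hk2. unfold rho.
    replace (w ^ 2 - p * q) with ((X+Y)/2) by lra. field. auto.
  - rewrite Rabs_left in Hk2 by lra. rewrite exp_Ropp, exp_ln in Hk2 by auto. rewrite Hk2. unfold rho.
    replace (w ^ 2 - p * q) with ((X+Y)/2) by lra. field. auto.
Qed.

Lemma norm_circ x : onS1 (circ x).
Proof. unfold onS1, norm2, circ. cbn [fst snd]. pose proof (sin2_cos2 (2*PI*x)). unfold Rsqr in H. lra. Qed.

Theorem theorem3p3 (P Q Rp : point) (t1 t2 t3 : R) :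
  inD P -> inD Q -> inD Rp -> ~ collinear P Q Rp ->
  collinear (circ t1) (circ t2) P -> collinear (circ t1) (circ t2) Q ->
  (exists n : Z, 0 < t1 - t2 + IZR n <= / 2) ->
  (exists n : Z, 2 * t3 = t1 + t2 + IZR n) ->
  (exists n : Z, 0 < t3 - t2 + IZR n <= / 2) ->
  let u := coord1 t3 P in
  let k := exp (dprime (circ t1) (circ t2) P Q) in
  let A := ellA k u in
  let B := ellB k u in
  let C := ellC k u in
  let E := fun X : point => ellF t3 A B C X = 1 in
  let Phi := fun X : point => ellF t3 A B C X < 1 in
  let Tri := circumscribing_triangle P Q Rp in
  (forall X, E X -> inD X \/ onS1 X) /\
  ellipse_tangent_S1_at t3 A B C (circ t1) /\
  ellipse_tangent_S1_at t3 A B C (circ t2) /\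
  (Phi Rp -> cardinal (Ensemble point) Tri 0) /\
  (E Rp -> cardinal (Ensemble point) Tri 1) /\
  (~ Phi Rp -> ~ E Rp -> cardinal (Ensemble point) Tri 2).
Proof.
  intros HP HQ HR Hncol HcP HcQ [n1 Hn1] [n Hn] _.
  cbv zeta.
  set (c := cos (2*PI*t3)). set (s := sin (2*PI*t3)).
  assert (Hcs : c^2 + s^2 = 1) by (unfold c, s; pose proof (sin2_cos2 (2*PI*t3)); unfold Rsqr in H; lra).
  set (be := 2*PI*t1 - 2*PI*t3).
  assert (T1x : f1 c s (circ t1) = cos be) by (unfold f1, circ, be, c, s; cbn [fst snd]; rewrite cos_minus; ring).
  assert (T1y : f2 c s (circ t1) = sin be) by (unfold f2, circ, be, c, s; cbn [fst snd]; rewrite sin_minus; ring).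
  assert (Hb2 : 2*PI*t2 - 2*PI*t3 = - be + 2*IZR (- n)*PI).
  { unfold be. rewrite opp_IZR. replace t3 with ((t1+t2+IZR n)/2) by lra. field. }
  assert (T2x : f1 c s (circ t2) = cos be).
  { unfold f1, circ, c, s; cbn [fst snd]. rewrite <- cos_minus, Hb2. destruct (per (-be) (-n)) as [-> _]. apply cos_neg. }
  assert (T2y : f2 c s (circ t2) = - sin be).
  { unfold f2, circ, c, s; cbn [fst snd]. replace (- cos (2 * PI * t2) * sin (2 * PI * t3) + sin (2 * PI * t2) * cos (2 * PI * t3)) with (sin (2*PI*t2 - 2*PI*t3)) by (rewrite sin_minus; ring).
    rewrite Hb2. destruct (per (-be) (-n)) as [_ ->]. apply sin_neg. }
  set (w := sin be) in *.
  assert (Hw : w <> 0).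
  { intro W0. assert (Hd : PI * (t1 - t2 + IZR n1) = be + IZR (n + n1) * PI).
    { unfold be. rewrite plus_IZR. replace t3 with ((t1+t2+IZR n)/2) by lra. field. }
    assert (S0 : sin (PI * (t1 - t2 + IZR n1)) = 0).
    { rewrite Hd, sin_plus, sin_mpi. fold w. rewrite W0. ring. }
    assert (0 < sin (PI * (t1 - t2 + IZR n1))).
    { apply sin_gt_0. - pose proof PI_RGT_0. nra. - pose proof PI_RGT_0. nra. }
    lra. }
  assert (HPx : f1 c s P = cos be).
  { unfold collinear in HcP. rewrite (cross3_f c s Hcs), T1x, T1y, T2x, T2y in HcP.
    assert (2*w*(f1 c s P - cos be) = 0) by lra. apply Rmult_integral in H. destruct H; [lra|lra]. }
  assert (HQx : f1 c s Q = cos be).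
  { unfold collinear in HcQ. rewrite (cross3_f c s Hcs), T1x, T1y, T2x, T2y in HcQ.
    assert (2*w*(f1 c s Q - cos be) = 0) by lra. apply Rmult_integral in H. destruct H; [lra|lra]. }
  assert (Hc1 : forall X, coord1 t3 X = f1 c s X) by reflexivity.
  assert (Hc2 : forall X, coord2 t3 X = f2 c s X) by (intro X; apply coord2_f).
  rewrite !Hc1.
  rewrite HPx. set (u := cos be) in *.
  assert (Huw : u^2 + w^2 = 1) by (unfold u, w; pose proof (sin2_cos2 be); unfold Rsqr in H; lra).
  set (p := f2 c s P). set (q := f2 c s Q). set (r := f1 c s Rp). set (t := f2 c s Rp).
  assert (HP' : u^2 + p^2 < 1) by (unfold inD in HP; rewrite (norm2_f c s Hcs), HPx in HP; exact HP).
  assert (HQ' : u^2 + q^2 < 1) by (unfold inD in HQ; rewrite (norm2_f c s Hcs), HQx in HQ; exact HQ).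
  assert (HR' : r^2 + t^2 < 1) by (unfold inD in HR; rewrite (norm2_f c s Hcs) in HR; exact HR).
  assert (Hpq : p <> q).
  { intro E. apply Hncol. unfold collinear. rewrite (cross3_f c s Hcs), HPx, HQx. fold p q. rewrite E. ring. }
  assert (Hdp : dprime (circ t1) (circ t2) P Q = /2 * Rabs (ln ((Rabs (w - q) * Rabs (-w - p)) / (Rabs (w - p) * Rabs (-w - q))))).
  { unfold dprime. rewrite !(dist_f c s Hcs), T1x, T1y, T2x, T2y, HPx, HQx. fold u p q. rewrite !sq_abs. reflexivity. }
  rewrite Hdp. set (k := exp (/2 * Rabs (ln ((Rabs (w - q) * Rabs (-w - p)) / (Rabs (w - p) * Rabs (-w - q)))))).
  destruct (k_rel w p q k Hw ltac:(lra) ltac:(lra) eq_refl) as [Hk0 Hkr].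
  assert (Hw2 : 0 < w^2) by (destruct (Rlt_or_le 0 w); [nra|]; assert (w < 0) by lra; nra).
  assert (Hu1 : u^2 < 1) by lra.
  assert (HD1 : 0 < 1-u^2-p^2) by lra. assert (HD2 : 0 < 1-u^2-q^2) by lra.
  assert (HM : 0 < 1-u^2-p*q) by nra.
  assert (HK : K2 k = 4*(1-u^2-p*q)^2/((1-u^2-p^2)*(1-u^2-q^2))).
  { unfold K2. replace (1-u^2) with (w^2) by lra.
    assert (0 < k^2) by nra. apply (Rmult_eq_reg_r (k^2 * ((w^2-p^2)*(w^2-q^2)))).
    - field_simplify; [|lra|nra]. transitivity ((k^2+1)^2*((w^2-p^2)*(w^2-q^2))); [ring|rewrite Hkr; ring].
    - apply Rmult_integral_contrapositive_currified; [lra|]. replace (w^2) with (1-u^2) by lra. nra. }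
  assert (HF : forall X, ellF t3 (ellA k u) (ellB k u) (ellC k u) X = EF (K2 k) u (f1 c s X) (f2 c s X)).
  { intro X. unfold ellF. rewrite Hc1, Hc2, ellA2, ellB2, ellC_eq by auto. reflexivity. }
  pose proof (K2_ge4 k Hk0) as HK4.
  split.
  { intros X HX. rewrite HF in HX. pose proof (EF_in _ _ _ _ HK4 Hu1 HX) as H.
    unfold inD, onS1. rewrite (norm2_f c s Hcs). destruct (Rle_lt_or_eq_dec _ _ H); auto. }
  split.
  { unfold ellipse_tangent_S1_at. split; [apply norm_circ|]. rewrite HF, T1x, T1y.
    rewrite Hc1, Hc2, T1x, T1y. rewrite ellA2, ellB2, ellC_eq by auto.
    destruct (EF_tan (K2 k) u w HK4 Hu1 ltac:(lra)). split; auto. }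
  split.
  { unfold ellipse_tangent_S1_at. split; [apply norm_circ|]. rewrite HF, T2x, T2y.
    rewrite Hc1, Hc2, T2x, T2y. rewrite ellA2, ellB2, ellC_eq by auto.
    destruct (EF_tan (K2 k) u (-w) HK4 Hu1 ltac:(replace ((-w)^2) with (w^2) by ring; lra)). split; auto. }
  set (L0 := Lc0 u p q r t).
  set (m1 := Lc1 u p q r t * c - Lc2 u p q r t * s).
  set (m2 := Lc1 u p q r t * s + Lc2 u p q r t * c).
  assert (HG : forall b, onS1 b -> Gf P Q Rp b = 2 * cross3 b P Q * (L0 + m1 * fst b + m2 * snd b)).
  { intros b Hb. rewrite (G_f c s Hcs P Q Rp b Hb) by (rewrite HPx, HQx; reflexivity).
    rewrite HPx. unfold L0, m1, m2, p, q, r, t. rewrite Lf_c. unfold f1, f2. ring. }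
  assert (HT : forall b, onS1 b -> cross3 b P Q = 0 -> L0 + m1 * fst b + m2 * snd b <> 0).
  { intros b Hb Hc0. rewrite (cross3_f c s Hcs), HPx, HQx in Hc0. fold p q in Hc0.
    assert (Hx : f1 c s b = u).
    { assert ((u - f1 c s b) * (q - p) = 0) by lra. apply Rmult_integral in H.
      destruct H as [H|H]; lra. }
    replace (L0 + m1 * fst b + m2 * snd b) with (Lf u p q r t (f1 c s b) (f2 c s b))
      by (rewrite Lf_c; unfold L0, m1, m2, f1, f2; ring).
    rewrite Hx. apply Lf_nz; auto.
    unfold onS1 in Hb. rewrite (norm2_f c s Hcs), Hx in Hb. exact Hb. }
  assert (HDel : m1^2 + m2^2 - L0^2 = Lc1 u p q r t ^2 + Lc2 u p q r t ^2 - Lc0 u p q r t ^2).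
  { unfold m1, m2, L0. transitivity ((c^2+s^2) * (Lc1 u p q r t ^2 + Lc2 u p q r t ^2) - Lc0 u p q r t ^2); [ring|rewrite Hcs; ring]. }
  assert (HKp : 0 < K2 k - 4*u^2) by lra.
  assert (HNp : 0 < 4*(1-u^2-p*q)^2 * (1-u^2)) by (apply Rmult_lt_0_compat; nra).
  pose proof (Delta_id u p q r t ltac:(lra) ltac:(lra) ltac:(lra)) as DI.
  cbv zeta in DI. rewrite <- HK in DI.
  assert (HNd : 4 * (1 - u ^ 2 - p * q) ^ 2 - 4 * u ^ 2 * ((1 - u ^ 2 - p ^ 2) * (1 - u ^ 2 - q ^ 2)) <> 0).
  { assert (4 * (1 - u ^ 2 - p * q) ^ 2 - 4 * u ^ 2 * ((1 - u ^ 2 - p ^ 2) * (1 - u ^ 2 - q ^ 2))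
      = (K2 k - 4*u^2) * ((1 - u ^ 2 - p ^ 2) * (1 - u ^ 2 - q ^ 2))) by (rewrite HK; field; nra).
    rewrite H. apply Rmult_integral_contrapositive_currified; nra. }
  specialize (DI HNd ltac:(lra)). rewrite <- HDel in DI.
  set (F := ellF t3 (ellA k u) (ellB k u) (ellC k u) Rp) in *.
  assert (HFR : F = EF (K2 k) u r t) by (unfold F; rewrite HF; reflexivity).
  rewrite <- HFR in DI.
  set (Dl := m1^2 + m2^2 - L0^2) in *.
  split.
  { intro HPh. apply (card0 P Q Rp L0 m1 m2 HP HQ HR HG HT).
    assert (Dl * (K2 k - 4*u^2) < 0) by (rewrite DI; nra). change (Dl < 0). nra. }
  split.
  { intro HE. apply (card1 P Q Rp L0 m1 m2 HP HQ HR HG HT).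
    - exists (circ t1). split; [apply norm_circ|]. rewrite (cross3_f c s Hcs), T1x, HPx, HQx. ring.
    - assert (Dl * (K2 k - 4*u^2) = 0) by (rewrite DI, HE; ring).
      apply Rmult_integral in H. change (Dl = 0). destruct H; [auto|lra]. }
  intros nPh nE. apply (card2 P Q Rp L0 m1 m2 HP HQ HR HG HT).
  assert (1 < F) by (destruct (Rtotal_order F 1) as [?|[?|?]]; tauto).
  assert (Dl * (K2 k - 4*u^2) > 0) by (rewrite DI; nra). change (Dl > 0). nra.
Qed.
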